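(* Let $q\in(0,\tfrac12)$ and let $T\sim U(0,1)$, $S\sim U(-1,0)$ be independent. Let $p_3^{SH}$ be the probability that the polynomial $$P_{T,S}(x)=(T+S-1)x^3+\big(1-T-2S+q(S-1-T)\big)x^2+\big(S+q(T-S)\big)x$$ has exactly three distinct roots in $[0,1]$. Then $$ p_3^{SH}= \begin{cases} 1-\dfrac{q}{2(1-q)}-\dfrac{1}{1-2q}\Big[\dfrac{(3\sqrt{q}+2)^2\sqrt{q}\,(5q^{3/2}+3q^2-9q-3\sqrt{q}+4)}{12(\sqrt{q}+1)^3}+\dfrac{-27 q^3-18q^2-32\sqrt{1-2q}\,q+48q+16\sqrt{1-2q}-16}{12q}\Big], & 0<q\leq \tfrac49,\\[3mm] 1-\dfrac{q}{2(1-q)}-\dfrac{8\sqrt{q}\,(1-2q)^2}{3(1-q)^3}, & \tfrac49<q<\tfrac12. \end{cases} $$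
   Context: This models the replicator–mutator dynamics of a two-player two-strategy Stag Hunt game with payoff entries $a_{11}=1$, $a_{22}=0$, $a_{21}=T$, $a_{12}=S$ and symmetric mutation probability $q$; the equilibria of the dynamics are exactly the distinct roots in $[0,1]$ of $P_{T,S}$, and ''the game has $k$ equilibria'' means $P_{T,S}$ has exactly $k$ distinct roots in $[0,1]$. *)

(* Defs.v *)
From HB Require Import structures.
From mathcomp Require Import all_boot all_order all_algebra.
From mathcomp Require Import all_classical all_reals all_analysis.
Set Implicit Arguments. Unset Strict Implicit. Unset Printing Implicit Defensive.
Import Order.TTheory GRing.Theory Num.Theory.
Local Open Scope ring_scope.
Local Open Scope classical_set_scope.

Definition P_TS {R : realType} (q t s x : R) : R :=
  (t + s - 1) * x ^+ 3
  + (1 - t - 2 * s + q * (s - 1 - t)) * x ^+ 2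
  + (s + q * (t - s)) * x.

Definition three_roots {R : realType} (q t s : R) : Prop :=
  exists x1 x2 x3 : R,
    [/\ x1 != x2, x1 != x3 & x2 != x3] /\
    [/\ 0 <= x1 <= 1, 0 <= x2 <= 1 & 0 <= x3 <= 1] /\
    [/\ P_TS q t s x1 = 0, P_TS q t s x2 = 0 & P_TS q t s x3 = 0] /\
    (forall x : R, 0 <= x <= 1 -> P_TS q t s x = 0 ->
       x = x1 \/ x = x2 \/ x = x3).

(* The event {exactly three equilibria} as a subset of the sample space of
   (T,S) in R x R, restricted to the support (0,1) x (-1,0) of the joint law. *)
Definition event3 {R : realType} (q : R) : set (R * R) :=
  [set ts | 0 < ts.1 < 1 /\ -1 < ts.2 < 0 /\ three_roots q ts.1 ts.2].

(* p_3^{SH}: with T ~ U(0,1), S ~ U(-1,0) independent, the joint law of (T,S)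
   has density 1 on (0,1) x (-1,0) w.r.t. the product Lebesgue measure, so the
   probability of the event is its product Lebesgue measure. *)
Definition p3SH {R : realType} (q : R) : \bar R :=
  ((@lebesgue_measure R) \x (@lebesgue_measure R))%E (event3 q).

Definition p3SH_formula {R : realType} (q : R) : R :=
  let r := Num.sqrt q in
  if q <= 4 / 9 then
    1 - q / (2 * (1 - q))
    - (1 - 2 * q)^-1 *
      ( (3 * r + 2) ^+ 2 * r * (5 * q * r + 3 * q ^+ 2 - 9 * q - 3 * r + 4)
          / (12 * (r + 1) ^+ 3)
      + (- 27 * q ^+ 3 - 18 * q ^+ 2 - 32 * Num.sqrt (1 - 2 * q) * q + 48 * q
         + 16 * Num.sqrt (1 - 2 * q) - 16) / (12 * q))
  else
    1 - q / (2 * (1 - q)) - 8 * r * (1 - 2 * q) ^+ 2 / (3 * (1 - q) ^+ 3).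

(* Main.v *)
Require Import Defs.
Set Warnings "-all".
From HB Require Import structures.
From mathcomp Require Import all_boot all_order all_algebra.
From mathcomp Require Import all_classical all_reals all_analysis.
From mathcomp Require Import measurable_realfun.
From mathcomp Require Import ring lra.
Import Order.TTheory GRing.Theory Num.Theory.
Import numFieldNormedType.Exports.
Set Implicit Arguments. Unset Strict Implicit.
Local Open Scope ring_scope.

Definition qa {R : realType} (q t s : R) := t + s - 1.
Definition qb {R : realType} (q t s : R) := 1 - t - 2 * s + q * (s - 1 - t).
Definition qc {R : realType} (q t s : R) := s + q * (t - s).
Definition qD {R : realType} (q t s : R) := qb q t s ^+ 2 - 4 * qa q t s * qc q t s.

Lemma P_TS_fact {R : realType} (q t s x : R) :
  P_TS q t s x = x * (qa q t s * x ^+ 2 + qb q t s * x + qc q t s).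
Proof. rewrite /P_TS /qa /qb /qc; ring. Qed.

Lemma two_roots_cD {R : realType} (q t s y1 y2 : R) :
  0 < q < 1/2 -> 0 < t < 1 -> -1 < s < 0 ->
  y1 != y2 -> 0 < y1 -> 0 < y2 ->
  qa q t s * y1 ^+ 2 + qb q t s * y1 + qc q t s = 0 ->
  qa q t s * y2 ^+ 2 + qb q t s * y2 + qc q t s = 0 ->
  qc q t s < 0 /\ 0 < qD q t s.
Proof.
move=> /andP[q0 q1] /andP[t0 t1] /andP[s0 s1] y12 y10 y20 e1 e2.
set a := qa q t s; set b := qb q t s; set c := qc q t s.
have a0 : a < 0 by rewrite /a /qa; lra.
have eb : b = - a * (y1 + y2).
  have : (y1 - y2) * (a * (y1 + y2) + b) = 0.
    have -> : (y1 - y2) * (a * (y1 + y2) + b) =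
      (a * y1 ^+ 2 + b * y1 + c) - (a * y2 ^+ 2 + b * y2 + c) by ring.
    by rewrite e1 e2 subrr.
  move/eqP; rewrite mulf_eq0 subr_eq0 (negbTE y12) /= addr_eq0 => /eqP h.
  by rewrite -[b]opprK -h; ring.
have ec : c = a * y1 * y2.
  transitivity ((a * y1 ^+ 2 + b * y1 + c) - a * y1 ^+ 2 - b * y1); first ring.
  by rewrite e1 eb; ring.
have eD : qD q t s = a ^+ 2 * (y1 - y2) ^+ 2.
  by rewrite /qD -/a -/b -/c eb ec; ring.
split.
  rewrite ec -mulrA; have := mulr_gt0 y10 y20; nra.
have d0 : y1 - y2 != 0 by rewrite subr_eq0.
rewrite eD; apply: mulr_gt0; rewrite lt0r sqrf_eq0 ?sqr_ge0 ?andbT //.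
by rewrite lt_eqF.
Qed.

Lemma three_roots_cD {R : realType} (q t s : R) :
  0 < q < 1/2 -> 0 < t < 1 -> -1 < s < 0 ->
  three_roots q t s -> qc q t s < 0 /\ 0 < qD q t s.
Proof.
move=> hq ht hs [x1 [x2 [x3 [[n12 n13 n23] [[i1 i2 i3] [[e1 e2 e3] _]]]]]].
have Q0 : forall x : R, x != 0 -> P_TS q t s x = 0 ->
    qa q t s * x ^+ 2 + qb q t s * x + qc q t s = 0.
  move=> x x0; rewrite P_TS_fact => /eqP; rewrite mulf_eq0 (negbTE x0) /=.
  by move/eqP.
have pos : forall x : R, 0 <= x <= 1 -> x != 0 -> 0 < x.
  by move=> x /andP[x0 _] xn; rewrite lt0r xn.
have [x10|x10] := eqVneq x1 0.
  have x20 : x2 != 0 by rewrite -x10 eq_sym.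
  have x30 : x3 != 0 by rewrite -x10 eq_sym.
  exact: (two_roots_cD hq ht hs n23 (pos _ i2 x20) (pos _ i3 x30) (Q0 _ x20 e2) (Q0 _ x30 e3)).
have [x20|x20] := eqVneq x2 0.
  have x30 : x3 != 0 by rewrite -x20 eq_sym.
  exact: (two_roots_cD hq ht hs n13 (pos _ i1 x10) (pos _ i3 x30) (Q0 _ x10 e1) (Q0 _ x30 e3)).
exact: (two_roots_cD hq ht hs n12 (pos _ i1 x10) (pos _ i2 x20) (Q0 _ x10 e1) (Q0 _ x20 e2)).
Qed.

Lemma cD_three_roots {R : realType} (q t s : R) :
  0 < q < 1/2 -> 0 < t < 1 -> -1 < s < 0 ->
  qc q t s < 0 -> 0 < qD q t s -> three_roots q t s.
Proof.
move=> /andP[q0 q1] /andP[t0 t1] /andP[s0 s1]; rewrite /qD.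
set a := qa q t s; set b := qb q t s; set c := qc q t s.
move=> c0 D0.
have ea : a = t + s - 1 by [].
have eb : b = 1 - t - 2 * s + q * (s - 1 - t) by [].
have ec : c = s + q * (t - s) by [].
have fac0 : forall x, P_TS q t s x = x * (a * x ^+ 2 + b * x + c).
  by move=> x; rewrite P_TS_fact.
clearbody a b c.
have a0 : a < 0 by rewrite ea; lra.
have b0 : 0 < b.
  have hq2 : 0 < 2 - q by lra.
  have h1 : (2 - q) * c < 0 by nra.
  have h2 : 0 < (1 - 2 * q) * (1 - t) by apply: mulr_gt0; lra.
  have h3 : 0 < b * (1 - q).
    have -> : b * (1 - q) = - ((2 - q) * c) + ((1 - 2 * q) * (1 - t) + q ^+ 2)
      by rewrite eb ec; ring.
    have := sqr_ge0 q; lra.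
  by move: h3; rewrite pmulr_lgt0 //; lra.
have ab : b + 2 * a < 0.
  have h1 : q * t < q by rewrite -[X in _ < X]mulr1 ltr_pM2l.
  have h2 : q * s < 0 by rewrite pmulr_rlt0.
  have h3 : 0 < q * t by apply: mulr_gt0.
  have -> : b + 2 * a = (t - 1) + q * s - q - q * t by rewrite ea eb; ring.
  lra.
have abc : a + b + c = - q by rewrite ea eb ec; ring.
set d := Num.sqrt (b ^+ 2 - 4 * a * c).
have d0 : 0 < d by rewrite sqrtr_gt0.
have dd : d ^+ 2 = b ^+ 2 - 4 * a * c by rewrite sqr_sqrtr // ltW.
set k := - (2 * a).
have k0 : 0 < k by rewrite /k; lra.
have kn : k != 0 by rewrite gt_eqF.
set y1 := (b - d) / k; set y2 := (b + d) / k.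
have db : d < b by nra.
have dab : d < - (2 * a) - b by nra.
have y10 : 0 < y1 by rewrite /y1 divr_gt0 // subr_gt0.
have y20 : 0 < y2 by rewrite /y2 divr_gt0 //; lra.
have y21 : y2 < 1 by rewrite /y2 ltr_pdivrMr // mul1r /k; lra.
have y12 : y1 < y2 by rewrite /y1 /y2 ltr_pM2r ?invr_gt0 //; lra.
have fac : forall x : R, P_TS q t s x = a * (x * ((x - y1) * (x - y2))).
  move=> x; rewrite fac0.
  have an : a != 0 by rewrite lt_eqF.
  have -> : c = (b ^+ 2 - d ^+ 2) / (4 * a) by rewrite dd; field.
  by rewrite /y1 /y2 /k; field.
rewrite /three_roots; exists (0:R); exists y1; exists y2. split; first split.
- by rewrite lt_eqF.
- by rewrite lt_eqF.
- by rewrite lt_eqF.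
split; first split.
- by rewrite lexx ler01.
- rewrite ltW //=; apply: ltW; lra.
- by rewrite !ltW.
split; first split.
- by rewrite fac; ring.
- by rewrite fac subrr; ring.
- by rewrite fac subrr; ring.
move=> x _; rewrite fac => /eqP; rewrite !mulf_eq0 (lt_eqF a0) /= !subr_eq0.
by case/orP => [/eqP->|/orP[/eqP->|/eqP->]]; auto.
Qed.

Definition h1 {R : realType} (q t : R) := - (q * t) / (1 - q).
Definition gg {R : realType} (q t : R) :=
  (2 * Num.sqrt ((1 - 2 * q) * t) - (1 - q) * (1 + t)) / q.

Lemma qD_eq {R : realType} (q t s : R) :
  qD q t s = ((1 - q) * t + q * s + 1 - q) ^+ 2 - 4 * ((1 - 2 * q) * t).
Proof. rewrite /qD /qa /qb /qc; ring. Qed.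

Lemma sqrt_lt_iff {R : realType} (X A : R) : 0 <= X -> 0 < A ->
  (2 * Num.sqrt X < A) <-> (4 * X < A ^+ 2).
Proof.
move=> X0 A0; have r0 := sqrtr_ge0 X; have rr := sqr_sqrtr X0.
split => h.
  rewrite -rr; nra.
rewrite -rr in h; nra.
Qed.

Lemma c_iff {R : realType} (q t s : R) : 0 < q < 1/2 ->
  (qc q t s < 0) <-> (s < h1 q t).
Proof.
move=> /andP[q0 q1]; rewrite /h1 /qc.
have q1' : 0 < 1 - q by lra.
rewrite ltr_pdivlMr //.
have -> : s + q * (t - s) = s * (1 - q) + q * t by ring.
split; lra.
Qed.

Lemma D_iff {R : realType} (q t s : R) : 0 < q < 1/2 -> 0 < t < 1 -> -1 < s ->
  (0 < qD q t s) <-> (gg q t < s).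
Proof.
move=> /andP[q0 q1] /andP[t0 t1] s0; rewrite /gg qD_eq.
have X0 : 0 <= (1 - 2 * q) * t by apply: mulr_ge0; lra.
have A0 : 0 < (1 - q) * t + q * s + 1 - q.
  have : 0 < (1 - q) * t by apply: mulr_gt0; lra.
  have : - q < q * s by nra.
  lra.
rewrite ltr_pdivrMr // ltrBlDr.
have -> : s * q + (1 - q) * (1 + t) = (1 - q) * t + q * s + 1 - q by ring.
rewrite (sqrt_lt_iff X0 A0).
split; lra.
Qed.

Local Open Scope classical_set_scope.

Lemma gg_lt_h1 {R : realType} (q t : R) : 0 < q < 1/2 -> 0 < t < 1 ->
  gg q t < h1 q t.
Proof.
move=> /andP[q0 q1] /andP[t0 t1].
have X0 : 0 <= (1 - 2 * q) * t by apply: mulr_ge0; lra.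
have X1 : (1 - 2 * q) * t < (1 - q) ^+ 2.
  have : (1 - 2 * q) * t < 1 - 2 * q by rewrite -[X in _ < X]mulr1 ltr_pM2l //; lra.
  have := sqr_ge0 q; rewrite sqrrB; lra.
set X := (1 - 2 * q) * t in X0 X1 *.
have r0 := sqrtr_ge0 X; have rr := sqr_sqrtr X0.
set r := Num.sqrt X in r0 rr *.
have r1 : r < 1 - q.
  have q2 : 0 < 1 - q by lra.
  rewrite -rr in X1; nra.
have e : h1 q t - gg q t = (1 - q - r) ^+ 2 / (q * (1 - q)).
  rewrite /h1 /gg -/X -/r.
  have -> : (1 - q - r) ^+ 2 = (1 - q) ^+ 2 - 2 * (1 - q) * r + (1 - 2 * q) * t.
    by rewrite -/X -rr; ring.
  field; apply/andP; split; rewrite gt_eqF //; lra.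
rewrite -subr_gt0 e; apply: divr_gt0.
  by rewrite lt0r sqrf_eq0 sqr_ge0 andbT gt_eqF // subr_gt0.
by apply: mulr_gt0; lra.
Qed.

Lemma h1_bounds {R : realType} (q t : R) : 0 < q < 1/2 -> 0 < t < 1 ->
  -1 < h1 q t < 0.
Proof.
move=> /andP[q0 q1] /andP[t0 t1]; rewrite /h1.
have q2 : 0 < 1 - q by lra.
have qt : 0 < q * t by apply: mulr_gt0.
have qt1 : q * t < q by rewrite -[X in _ < X]mulr1 ltr_pM2l.
rewrite ltr_pdivlMr // ltr_pdivrMr //; apply/andP; split; lra.
Qed.

Lemma xsec_eq {R : realType} (q t : R) : 0 < q < 1/2 ->
  xsection (event3 q) t =
  if (0 < t < 1) then `]Num.max (-1) (gg q t), h1 q t[ else set0.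
Proof.
move=> hq; apply/seteqP; split => s; rewrite /xsection /event3 /= in_setE /=.
  move=> [ht [hs h3]]; rewrite ht /= in_itv /=.
  have [c0 D0] := three_roots_cD hq ht hs h3.
  have := (c_iff t s hq).1 c0; have := (D_iff hq ht (andP hs).1).1 D0.
  by move: hs => /andP[s0 _] ? ?; rewrite gt_max s0 /=; apply/andP; split.
case: ifP => ht //=; rewrite in_itv /= gt_max => /andP[/andP[s0 gs] sh].
have [h10 h11] := andP (h1_bounds hq ht).
have hs : -1 < s < 0 by rewrite s0 /=; lra.
split => //; split => //.
apply: cD_three_roots => //.
  by apply/(c_iff t s hq).
exact/(D_iff hq ht s0).
Qed.

Definition ell {R : realType} (q t : R) := h1 q t - Num.max (-1) (gg q t).

Lemma p3SH_int {R : realType} (q : R) : 0 < q < 1/2 ->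
  p3SH q = (\int[lebesgue_measure]_(t in `]0%R, 1%R[) (ell q t)%:E)%E.
Proof.
move=> hq; rewrite /p3SH /product_measure1 [RHS]integral_mkcond.
apply: eq_integral => t _ /=.
rewrite xsec_eq // patchE.
case: ifPn => ht.
  rewrite mem_set; last by rewrite /= in_itv.
  rewrite lebesgue_measure_itv /= ifT.
    by rewrite /ell -EFinD.
  by rewrite lte_fin gt_max gg_lt_h1 // andbT; case/andP: (h1_bounds hq ht).
rewrite memNset ?measure0 //= in_itv /=; exact/negP.
Qed.

Definition fam {R : realType} (al be ga de ep : R) (t : R) :=
  al * t ^+ 2 + be * t + ga * (t * Num.sqrt t) + de * Num.sqrt t + ep.

Lemma fam_continuous {R : realType} (al be ga de ep : R) :
  continuous (fam al be ga de ep).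
Proof.
move=> x; rewrite /fam.
have cs : Num.sqrt t @[t --> x] --> Num.sqrt x by exact: sqrt_continuous.
have ci : t @[t --> x] --> x by [].
apply: cvgD; last exact: cvg_cst.
apply: cvgD; last by apply: cvgM => //; exact: cvg_cst.
apply: cvgD; last by apply: cvgM; [exact: cvg_cst| exact: cvgM].
apply: cvgD; apply: cvgM; try exact: cvg_cst; try exact: ci.
exact: cvgM.
Qed.

Lemma fam_derive {R : realType} (al be ga ep x : R) : 0 < x ->
  is_derive x 1 (fam al be ga 0 ep) (fam 0 (2 * al) 0 (3 / 2 * ga) be x).
Proof.
move=> x0; have H1 := is_derive1_sqrt x0.
have Hid := @is_derive_id R R^o x 1.
have H := @is_deriveD R R^o R^o
  (fun t => al * t ^+ 2 + be * t + ga * (t * Num.sqrt t) + 0 * Num.sqrt t)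
  (fun t => ep) x 1 _ _
  (@is_deriveD R R^o R^o
    (fun t => al * t ^+ 2 + be * t + ga * (t * Num.sqrt t))
    (fun t => 0 * Num.sqrt t) x 1 _ _
    (@is_deriveD R R^o R^o
      (fun t => al * t ^+ 2 + be * t)
      (fun t => ga * (t * Num.sqrt t)) x 1 _ _
      (@is_deriveD R R^o R^o (fun t => al * t ^+ 2) (fun t => be * t) x 1 _ _
        (@is_deriveZ R R^o R^o (fun t => t ^+ 2) al x 1 _
           (@is_deriveX R R^o (fun t => t) 2 x 1 _ Hid))
        (@is_deriveZ R R^o R^o (fun t => t) be x 1 _ Hid))
      (@is_deriveZ R R^o R^o (fun t => t * Num.sqrt t) ga x 1 _
         (@is_deriveM R R^o (fun t => t) Num.sqrt x 1 _ _ Hid H1)))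
    (@is_deriveZ R R^o R^o Num.sqrt 0 x 1 _ H1))
  (@is_derive_cst R R^o R^o ep x 1).
apply: is_derive_eq H _.
rewrite -[LHS]/(al * (2 * x ^+ 1 * 1) + be * 1 + ga * (x * (2 * Num.sqrt x)^-1 + Num.sqrt x * 1) + 0 * (2 * Num.sqrt x)^-1 + 0).
rewrite /fam.
have s0 : 0 < Num.sqrt x by rewrite sqrtr_gt0.
have ss : x = Num.sqrt x ^+ 2 by rewrite sqr_sqrtr // ltW.
move: s0 ss; set s := Num.sqrt x => s0 ss.
rewrite ss; field; by rewrite gt_eqF.
Qed.

Lemma FTC_fam {R : realType} (al be ga ep a b : R) (b0 b1 : bool) (g : R -> R) :
  0 <= a -> a <= b -> measurable_fun `]a, b[ g ->
  {in `]a, b[%R, g =1 fam 0 (2 * al) 0 (3 / 2 * ga) be} ->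
  (\int[lebesgue_measure]_(x in [set` Interval (BSide b0 a) (BSide b1 b)]) (g x)%:E
   = (fam al be ga 0 ep b - fam al be ga 0 ep a)%:E)%E.
Proof.
move=> a0 ab mg eg.
set f := fam 0 (2 * al) 0 (3 / 2 * ga) be.
set F := fam al be ga 0 ep.
have mf : measurable_fun `]a, b[ f.
  apply: (measurable_funS measurableT) => //.
  apply: continuous_measurable_fun; exact: fam_continuous.
rewrite (@eq_integral_itv_bounded _ _ _ f g) //.
have mfE : measurable_fun `]a, b[ (EFin \o f) by exact/measurable_EFinP.
case: (eqVneq a b) => [eab|nab].
  rewrite integral_itv_bndoo // -eab.
  by rewrite set_itvE integral_set0 subrr.
have lab : a < b by rewrite lt_neqAle nab ab.
rewrite integral_itv_bndoo; last exact/measurable_EFinP.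
rewrite -(@integral_itv_bndoo _ _ _ _ true false); last exact/measurable_EFinP.
apply: continuous_FTC2 => //.
- apply: continuous_subspaceT; exact: fam_continuous.
- split.
  + move=> x; rewrite in_itv /= => /andP[ax _].
    have xp : 0 < x by apply: le_lt_trans ax.
    exact: (fam_derive al be ga ep xp).(ex_derive).
  + apply: cvg_at_right_filter; exact: fam_continuous.
  + apply: cvg_at_left_filter; exact: fam_continuous.
- move=> x; rewrite in_itv /= => /andP[ax _].
  have xp : 0 < x by apply: le_lt_trans ax.
  by rewrite derive1E (fam_derive al be ga ep xp).(derive_val).
Qed.

Lemma disj_itv_split {R : realType} (a : itv_bound R) (x : R) (y : itv_bound R) :
  [disjoint [set` Interval a (BLeft x)] & [set` Interval (BLeft x) y]].
Proof.
apply/disj_setPS => z [/=]; rewrite !itv_boundlr => /andP[_ h1] /andP[h2 _].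
move: h1 h2; rewrite !bnd_simp => h1 h2; lra.
Qed.

Lemma int_split {R : realType} (f : R -> R) (a : itv_bound R) (x : R) (y : itv_bound R) :
  (a <= BLeft x)%O -> (BLeft x <= y)%O -> measurable_fun setT f ->
  (\int[lebesgue_measure]_(t in [set` Interval a y]) (f t)%:E =
   \int[lebesgue_measure]_(t in [set` Interval a (BLeft x)]) (f t)%:E +
   \int[lebesgue_measure]_(t in [set` Interval (BLeft x) y]) (f t)%:E)%E.
Proof.
move=> ax xy mf.
rewrite (itv_bndbnd_setU ax xy) integral_setU //.
- apply/measurable_EFinP; apply: (measurable_funS measurableT) => //.
- exact: disj_itv_split.
Qed.


Definition rho {R : realType} (q : R) := Num.sqrt (1 - 2 * q).
Definition w1 {R : realType} (q : R) := rho q / (1 + Num.sqrt q).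
Definition w2 {R : realType} (q : R) := rho q / (1 - Num.sqrt q).

Lemma h1_fam {R : realType} (q : R) : 0 < q < 1/2 ->
  h1 q = fam 0 (- q / (1 - q)) 0 0 0.
Proof.
move=> /andP[q0 q1]; apply/funext => t; rewrite /h1 /fam.
by field; rewrite gt_eqF //; lra.
Qed.

Lemma gg_fam {R : realType} (q : R) : 0 < q < 1/2 ->
  gg q = fam 0 (- (1 - q) / q) 0 (2 * rho q / q) (- (1 - q) / q).
Proof.
move=> /andP[q0 q1]; apply/funext => t; rewrite /gg /fam /rho sqrtrM; last lra.
by field; rewrite gt_eqF.
Qed.

Lemma ell_meas {R : realType} (q : R) : 0 < q < 1/2 -> measurable_fun setT (ell q).
Proof.
move=> hq.
have -> : ell q = (h1 q) \- ((fun=> -1) \max (gg q)).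
  by apply/funext => t.
apply: measurable_funB.
  rewrite h1_fam //; apply: continuous_measurable_fun; exact: fam_continuous.
apply: measurable_maxr => //.
rewrite gg_fam //; apply: continuous_measurable_fun; exact: fam_continuous.
Qed.

Lemma basic_facts {R : realType} (q : R) : 0 < q < 1/2 ->
  [/\ 0 < Num.sqrt q, Num.sqrt q ^+ 2 = q, Num.sqrt q < 1,
      0 < rho q & rho q ^+ 2 = 1 - 2 * q].
Proof.
move=> /andP[q0 q1].
have r0 : 0 < Num.sqrt q by rewrite sqrtr_gt0.
have rr : Num.sqrt q ^+ 2 = q by rewrite sqr_sqrtr // ltW.
split => //.
- by rewrite -[X in _ < X]sqrtr1 ltr_sqrt //; lra.
- by rewrite sqrtr_gt0; lra.
- by rewrite sqr_sqrtr //; lra.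
Qed.

Lemma gg1_eq {R : realType} (q t : R) : 0 < q < 1/2 -> 0 <= t ->
  gg q t + 1 = - ((1 - q) * ((Num.sqrt t - w1 q) * (Num.sqrt t - w2 q))) / q.
Proof.
move=> hq t0; have [r0 rr r1 p0 pp] := basic_facts hq.
rewrite gg_fam // /fam /w1 /w2.
have tt : t = Num.sqrt t ^+ 2 by rewrite sqr_sqrtr.
move: rr r0 r1 pp p0; set r := Num.sqrt q; set p := rho q => rr r0 r1 pp p0.
move: tt; set w := Num.sqrt t => tt.
rewrite tt -rr.
have e : - ((1 - r ^+ 2) * ((w - p / (1 + r)) * (w - p / (1 - r)))) / r ^+ 2 =
   - ((1 - r ^+ 2) * w ^+ 2 - 2 * p * w + p ^+ 2) / r ^+ 2.
  by field; rewrite !gt_eqF //; lra.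
rewrite e pp -rr; field; rewrite gt_eqF //.
Qed.

Lemma w_facts {R : realType} (q : R) : 0 < q < 1/2 ->
  [/\ 0 < w1 q, w1 q < w2 q, w1 q < 1 & (q <= 4/9) = (1 <= w2 q)].
Proof.
move=> hq; have [r0 rr r1 p0 pp] := basic_facts hq.
move: hq => /andP[q0 q1].
rewrite /w1 /w2.
have p1 : rho q < 1.
  rewrite /rho -[X in _ < X]sqrtr1 ltr_sqrt //; lra.
split.
- by apply: divr_gt0 => //; lra.
- rewrite -subr_gt0.
  have -> : rho q / (1 - Num.sqrt q) - rho q / (1 + Num.sqrt q) =
    2 * rho q * Num.sqrt q / ((1 + Num.sqrt q) * (1 - Num.sqrt q)).
    by field; rewrite !gt_eqF //; lra.
  apply: divr_gt0; first by rewrite !mulr_gt0.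
  by apply: mulr_gt0; lra.
- by rewrite ltr_pdivrMr; lra.
- rewrite ler_pdivlMr // [in RHS]ler_pdivlMr ?subr_gt0 // mul1r.
  move: rr r0 r1 pp p0 p1; set r := Num.sqrt q; set p := rho q => rr r0 r1 pp p0 p1.
  apply/idP/idP => h.
  + have hr : r <= 2/3.
      rewrite -rr in h; nra.
    rewrite -subr_ge0; have : 0 <= p ^+ 2 - (1 - r) ^+ 2.
      rewrite pp -rr; nra.
    nra.
  + have : (1 - r) ^+ 2 <= p ^+ 2 by nra.
    rewrite pp -rr => h2.
    have hr : r <= 2/3 by nra.
    nra.
Qed.

Lemma ell_out {R : realType} (q t : R) : 0 < q < 1/2 -> 0 < t ->
  (Num.sqrt t < w1 q \/ w2 q < Num.sqrt t) -> ell q t = h1 q t + 1.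
Proof.
move=> hq t0 h; have [w10 w12 w11 _] := w_facts hq.
have [q0 q1] := andP hq.
have e := gg1_eq hq (ltW t0).
have P0 : 0 < (Num.sqrt t - w1 q) * (Num.sqrt t - w2 q).
  by case: h => h; nra.
have : gg q t + 1 < 0.
  rewrite e ltr_pdivrMr // mul0r oppr_lt0; apply: mulr_gt0 => //; lra.
move=> hg; rewrite /ell max_l; first by rewrite opprK.
apply: ltW; lra.
Qed.

Lemma ell_in {R : realType} (q t : R) : 0 < q < 1/2 -> 0 < t ->
  w1 q < Num.sqrt t < w2 q -> ell q t = h1 q t - gg q t.
Proof.
move=> hq t0 /andP[h1' h2']; have [w10 w12 w11 _] := w_facts hq.
have [q0 q1] := andP hq.
have e := gg1_eq hq (ltW t0).
have P0 : (Num.sqrt t - w1 q) * (Num.sqrt t - w2 q) < 0 by nra.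
have : 0 < gg q t + 1.
  rewrite e ltr_pdivlMr // mul0r oppr_gt0.
  by rewrite pmulr_rlt0 //; lra.
move=> hg; rewrite /ell max_r //; apply: ltW; lra.
Qed.

Definition alA {R : realType} (q : R) := - q / (2 * (1 - q)).
Definition alB {R : realType} (q : R) := (- q / (1 - q) + (1 - q) / q) / 2.
Definition beB {R : realType} (q : R) := (1 - q) / q.
Definition gaB {R : realType} (q : R) := - (4 / 3) * rho q / q.
Definition FA {R : realType} (q : R) := fam (alA q) 1 0 0 0.
Definition FB {R : realType} (q : R) := fam (alB q) (beB q) (gaB q) 0 0.
Definition t1 {R : realType} (q : R) := w1 q ^+ 2.
Definition T2 {R : realType} (q : R) := Num.min 1 (w2 q ^+ 2).

Lemma ellA_fam {R : realType} (q t : R) : 0 < q < 1/2 ->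
  h1 q t + 1 = fam 0 (2 * alA q) 0 (3 / 2 * 0) 1 t.
Proof.
move=> /andP[q0 q1]; rewrite /h1 /fam /alA; field; rewrite gt_eqF //; lra.
Qed.

Lemma ellB_fam {R : realType} (q t : R) : 0 < q < 1/2 ->
  h1 q t - gg q t = fam 0 (2 * alB q) 0 (3 / 2 * gaB q) (beB q) t.
Proof.
move=> hq; rewrite h1_fam // gg_fam //; move: hq => /andP[q0 q1].
rewrite /fam /alB /gaB /beB; field; rewrite !gt_eqF //; lra.
Qed.

Lemma sqrt_sq {R : realType} (w : R) : 0 <= w -> Num.sqrt (w ^+ 2) = w.
Proof. by move=> w0; rewrite sqrtr_sqr ger0_norm. Qed.

Lemma int_ell {R : realType} (q : R) : 0 < q < 1/2 ->
  (\int[lebesgue_measure]_(t in `]0%R, 1%R[) (ell q t)%:E =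
   ((FA q (t1 q) - FA q 0) + (FB q (T2 q) - FB q (t1 q)) + (FA q 1 - FA q (T2 q)))%:E)%E.
Proof.
move=> hq; have [w10 w12 w11 _] := w_facts hq.
have t10 : 0 < t1 q by rewrite /t1 exprn_gt0.
have t11 : t1 q < 1 by rewrite /t1 expr_lt1 // ltW.
have t1T2 : t1 q <= T2 q.
  rewrite /T2 le_min (ltW t11) /t1 ler_sqr ?nnegrE ?ltW //; exact: lt_trans w12.
have T21 : T2 q <= 1 by rewrite /T2 ge_min lexx.
have me := ell_meas hq.
have t10' : 0 <= t1 q by apply: ltW.
have T20 : 0 <= T2 q by apply: le_trans t1T2.
have ms : forall a b : R, measurable_fun `]a, b[ (ell q).
  by move=> a b; apply: (measurable_funS measurableT).
rewrite (@int_split _ _ _ (t1 q)) ?bnd_simp ?(ltW t11) //.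
rewrite [X in (_ + X)%E](@int_split _ _ _ (T2 q)) ?bnd_simp //.
rewrite (@FTC_fam _ (alA q) 1 0 0 0 (t1 q)) //; last first.
  move=> t; rewrite in_itv /= => /andP[ta tb].
  rewrite ell_out //; first exact: ellA_fam.
  left; rewrite -(@sqrt_sq _ (w1 q)) ?ltW // ltr_sqrt //.
rewrite (@FTC_fam _ (alB q) (beB q) (gaB q) 0 (t1 q) (T2 q)) //; last first.
  move=> t; rewrite in_itv /= => /andP[ta tb].
  have t0 : 0 < t by apply: lt_trans ta.
  rewrite ell_in //; first exact: ellB_fam.
  apply/andP; split.
    by rewrite -(@sqrt_sq _ (w1 q)) ?ltW // ltr_sqrt.
  rewrite -(@sqrt_sq _ (w2 q)) ?ltW ?(lt_trans w10) // ltr_sqrt ?exprn_gt0 ?(lt_trans w10) //.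
  by apply: (lt_le_trans tb); rewrite /T2 ge_min lexx orbT.
rewrite (@FTC_fam _ (alA q) 1 0 0 (T2 q) 1) //; last first.
  move=> t; rewrite in_itv /= => /andP[ta tb].
  have t0 : 0 < t by apply: (lt_le_trans t10); apply: (le_trans t1T2); apply: ltW.
  rewrite ell_out //; first exact: ellA_fam.
  right.
  have T2e : T2 q = w2 q ^+ 2.
    move: ta tb; rewrite /T2; case: (leP 1 (w2 q ^+ 2)) => h //.
    move=> a b; lra.
  rewrite T2e in ta.
  have w2p : 0 < w2 q := lt_trans w10 w12.
  by rewrite -(sqrt_sq (ltW w2p)) ltr_sqrt.
by rewrite -!EFinD /FA /FB addrA.
Qed.

Lemma eval_sq {R : realType} (q u : R) : 0 < q < 1/2 -> 0 < u ->
  let w := rho q / u in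
  [/\ w ^+ 2 = (1 - 2 * q) / u ^+ 2, Num.sqrt (w ^+ 2) = w &
      gaB q * (w ^+ 2 * Num.sqrt (w ^+ 2)) = - (4 / 3) * (1 - 2 * q) ^+ 2 / (q * u ^+ 3)].
Proof.
move=> hq u0 w; have [r0 rr r1 p0 pp] := basic_facts hq.
have [q0 q1] := andP hq.
have w0 : 0 <= w by rewrite /w divr_ge0 // ltW.
split.
- by rewrite /w expr_div_n pp.
- exact: sqrt_sq.
rewrite sqrt_sq // /gaB /w.
transitivity (- (4 / 3) * (rho q ^+ 2) ^+ 2 / (q * u ^+ 3)).
  by field; rewrite !gt_eqF.
by rewrite pp.
Qed.

Unset Implicit Arguments.
Local Close Scope classical_set_scope.

Theorem theorem2p3 (R : realType) (q : R) (hq0 : 0 < q) (hq1 : q < 1 / 2) :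
  p3SH q = (p3SH_formula q)%:E.
Proof.
have hq : 0 < q < 1/2 by rewrite hq0.
rewrite p3SH_int // int_ell //; congr EFin.
have [r0 rr r1 p0 pp] := basic_facts hq.
have [w10 w12 w11 hw2] := w_facts hq.
have u1 : 0 < 1 + Num.sqrt q by lra.
have u2 : 0 < 1 - Num.sqrt q by lra.
have [e1 s1 g1] := eval_sq hq u1.
have [e2 s2 g2] := eval_sq hq u2.
rewrite /FA /FB /t1 /T2 /p3SH_formula.
rewrite /w1 /w2.
have fam0 : forall al be ga ep : R, fam al be ga 0 ep 0 = ep.
  by move=> al be ga ep; rewrite /fam sqrtr0; ring.
have fam1 : forall al be ga ep : R, fam al be ga 0 ep 1 = al + be + ga + ep.
  by move=> al be ga ep; rewrite /fam sqrtr1; ring.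
have famw : forall al be ga ep w : R, fam al be ga 0 ep w =
    al * w ^+ 2 + be * w + ga * (w * Num.sqrt w) + ep.
  by move=> al be ga ep w; rewrite /fam; ring.
case: ifPn => hq49.
- have -> : Num.min 1 ((rho q / (1 - Num.sqrt q)) ^+ 2) = 1.
    have h : 1 <= w2 q by rewrite -hw2.
    have w2p : 0 < w2 q := lt_trans w10 w12.
    rewrite min_l // -[X in (X <= _)%O](expr1n _ 2) ler_sqr ?nnegrE ?ler01 //.
    exact: ltW.
  rewrite fam0 fam1 !famw subrr addr0 g1 e1.
  rewrite /alA /alB /beB /gaB /rho.
  move: rr r0 r1 pp p0; rewrite /rho.
  set r := Num.sqrt q; set p := Num.sqrt (1 - 2 * q) => rr r0 r1 pp p0.
  rewrite -rr sqrtr1 !mul0r; field.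
  by rewrite rr !gt_eqF //; lra.
- have h : w2 q < 1 by rewrite ltNge -hw2.
  have w2p : 0 < w2 q := lt_trans w10 w12.
  have -> : Num.min 1 ((rho q / (1 - Num.sqrt q)) ^+ 2) = (rho q / (1 - Num.sqrt q)) ^+ 2.
    rewrite min_r // -[X in (_ <= X)%O](expr1n _ 2) ler_sqr ?nnegrE ?ler01 //.
      exact: ltW.
    exact: ltW.
  rewrite fam0 fam1 !famw g1 e1 g2 e2.
  rewrite /alA /alB /beB /gaB /rho.
  move: rr r0 r1 pp p0; rewrite /rho.
  set r := Num.sqrt q; set p := Num.sqrt (1 - 2 * q) => rr r0 r1 pp p0.
  rewrite -rr !mul0r; field.
  by rewrite rr !gt_eqF //; lra.
Qed.
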